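(* Let $G$ be a finite group and $p$ a prime. The categories $\mathcal S^*_G,\mathcal T^*_G,\mathcal L^*_G,\mathcal F^*_G,\widetilde{\mathcal F}^*_G,\mathcal O^*_G$ have Euler characteristics in the sense of Leinster, and \[ \chi(\mathcal C^* )=\sum_{[H]}\frac{-\mu(H)}{|\mathcal C^*(H)|},\qquad \mathcal C^*=\mathcal T^*_G,\ \mathcal L^*_G,\ \mathcal F^*_G, \] where the sum runs over the set of $G$-conjugacy classes $[H]$ of nonidentity $p$-subgroups $H$ of $G$. Moreover $\chi(\mathcal S^*_G)=|G|\,\chi(\mathcal T^*_G)$, $\chi(\widetilde{\mathcal F}^*_G)=\chi(\mathcal F^*_G)$, and \[ \chi(\mathcal O^*_G)=\chi(\mathcal T^*_G)+\frac{p-1}{p}\sum_{[C]\text{ cyclic}}\frac{1}{|\mathcal O^*_G(C)|}, \] where the last sum runs over the set of $G$-conjugacy classes of nonidentity cyclic $p$-subgroups $C$ of $G$.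
   Context: For subgroups $H,K\le G$ and $g\in G$ write $H^g=g^{-1}Hg$ and $N_G(H,K)=\{g\in G: H^g\le K\}$. For a finite group $X$, $O^p(X)$ is the smallest normal subgroup of $X$ whose quotient is a $p$-group. The following categories all have as objects the nonidentity $p$-subgroups of $G$, with composition induced by multiplication in $G$: the poset $\mathcal S^*_G$ (exactly one morphism $H\to K$ if $H\le K$, none otherwise); $\mathcal T^*_G(H,K)=N_G(H,K)$; $\mathcal L^*_G(H,K)=O^p(C_G(H))\backslash N_G(H,K)$; $\mathcal F^*_G(H,K)=C_G(H)\backslash N_G(H,K)$; $\mathcal O^*_G(H,K)=N_G(H,K)/K$; $\widetilde{\mathcal F}^*_G(H,K)=C_G(H)\backslash N_G(H,K)/K$ (double cosets). For a category $\mathcal C$, $\mathcal C(H)=\mathcal C(H,H)$; so e.g. $\mathcal T^*_G(H)=N_G(H)$, $\mathcal L^*_G(H)=O^p(C_G(H))\backslash N_G(H)$, $\mathcal F^*_G(H)=C_G(H)\backslash N_G(H)$, $\mathcal O^*_G(H)=N_G(H)/H$. Leinster Euler characteristic: for a finite category $\mathcal C$ let $\zeta(a,b)=|\mathcal C(a,b)|$. A weighting is a function $k^\bullet:\mathrm{Ob}(\mathcal C)\to\mathbb Q$ with $\sum_b\zeta(a,b)k^b=1$ for every object $a$; a coweighting is $k_\bullet:\mathrm{Ob}(\mathcal C)\to\mathbb Q$ with $\sum_a k_a\zeta(a,b)=1$ for every object $b$. If $\mathcal C$ admits both, it has Euler characteristic $\chi(\mathcal C)=\sum_b k^b=\sum_a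 k_a$ (independent of the choices). $\mu(H,K)$ denotes the Möbius function of the poset of all subgroups of $G$ ($\mu(H,H)=1$, $\mu(H,K)=-\sum_{H\le L<K}\mu(H,L)$ if $H<K$, $\mu(H,K)=0$ if $H\not\le K$), and $\mu(K)=\mu(1,K)$. *)

(* Defs.v *)
From HB Require Import structures.
From mathcomp Require Import all_boot all_order all_algebra all_fingroup all_solvable.
Set Implicit Arguments. Unset Strict Implicit. Unset Printing Implicit Defensive.
Import GRing.Theory Num.Theory.
Local Open Scope group_scope.

Section Defs.
Variable gT : finGroupType.
Implicit Types (G H K X : {group gT}).

Definition pobj (p : nat) G H : bool :=
  [&& H \subset G, p.-group H & H != 1%G].

(* N_G(H,K) = {g in G | H^g <= K}, with H^g = g^-1 H g = H :^ g. *)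
Definition transp G H K : {set gT} := [set g in G | H :^ g \subset K].

(* O^p(X): smallest normal subgroup of X with p-group quotient, i.e. the
   intersection of all normal subgroups N of X with X/N a p-group. *)
Definition Oup (p : nat) (X : {set gT}) : {set gT} :=
  \bigcap_(N : {group gT} | (N <| X) && p.-group (X / N)) N.

(* Hom-set cardinalities zeta(H,K) of the six categories. *)
Definition zetaS (H K : {group gT}) : nat := (H \subset K).
Definition zetaT G H K : nat := #|transp G H K|.
(* O^p(C_G(H)) \ N_G(H,K): right cosets O^p(C_G(H)) g *)
Definition zetaL p G H K : nat :=
  #|[set Oup p 'C_G(H) :* g | g in transp G H K]|.
Definition zetaF G H K : nat := #|[set 'C_G(H) :* g | g in transp G H K]|.
(* N_G(H,K) / K: left cosets g K *)
Definition zetaO G H K : nat := #|[set g *: (K : {set gT}) | g in transp G H K]|.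
(* C_G(H) \ N_G(H,K) / K: double cosets C_G(H) g K *)
Definition zetaFt G H K : nat :=
  #|[set ('C_G(H) :* g) * K | g in transp G H K]|.

(* Leinster weightings / coweightings on a finite category whose objects are
   the groups satisfying [obj] and whose hom-set sizes are [zeta]. *)
Definition is_weighting (obj : pred {group gT}) (zeta : {group gT} -> {group gT} -> nat)
    (k : {group gT} -> rat) : Prop :=
  forall a, obj a -> (\sum_(b | obj b) (zeta a b)%:R * k b = 1)%R.

Definition is_coweighting (obj : pred {group gT}) (zeta : {group gT} -> {group gT} -> nat)
    (k : {group gT} -> rat) : Prop :=
  forall b, obj b -> (\sum_(a | obj a) k a * (zeta a b)%:R = 1)%R.

Definition euler_char (obj : pred {group gT}) (zeta : {group gT} -> {group gT} -> nat)
    (chi : rat) : Prop :=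
  [/\ exists k, is_weighting obj zeta k,
      exists k, is_coweighting obj zeta k,
      forall k, is_weighting obj zeta k -> (\sum_(b | obj b) k b)%R = chi
    & forall k, is_coweighting obj zeta k -> (\sum_(a | obj a) k a)%R = chi].

Fixpoint mobius_rec (n : nat) (H K : {group gT}) : int :=
  match n with
  | 0 => 0%R
  | n'.+1 =>
      if H == K then 1%R
      else if H \subset K then
        (- \sum_(L : {group gT} | (H \subset L) && (L \proper K)) mobius_rec n' H L)%R
      else 0%R
  end.
Definition mobius H K : int := mobius_rec #|K| H K.
Definition mu K : int := mobius 1%G K.

Definition conj_classes G (P : pred {group gT}) : {set {set {group gT}}} :=
  [set orbit 'JG G H | H : {group gT} in P].
Definition crep (X : {set {group gT}}) : {group gT} := odflt 1%G [pick K in X].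

End Defs.

(* Main.v *)
From HB Require Import structures.
Require Import Defs.
From mathcomp Require Import all_boot all_order all_algebra all_fingroup all_solvable.
From mathcomp Require Import ring.
Import GRing.Theory Num.Theory.
Set Implicit Arguments. Unset Strict Implicit. Unset Printing Implicit Defensive.

Section Work.
Variable gT : finGroupType.
Implicit Types (G H K L a b : {group gT}).

Lemma mobius_rec_fuel n m H K : (#|K| <= n)%N -> (#|K| <= m)%N ->
  mobius_rec n H K = mobius_rec m H K.
Proof.
have K0 := cardG_gt0 K.
elim: n m H K K0 => [|n IH] [|m] H K K0 hn hm //=;
  try by move: (leq_trans K0 hn); try by move: (leq_trans K0 hm).
case: eqP => // _; case: ifP => // _; congr (- _)%R.
apply: eq_bigr => L /andP[_ /proper_card hL].
by apply: IH; [exact: cardG_gt0 | rewrite -ltnS; exact: leq_trans hL _ ..].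
Qed.

Lemma mu1 : mu [1 gT]%G = 1%R.
Proof. by rewrite /mu /mobius cards1 /= eqxx. Qed.

Lemma mu_rec K : K != 1%G ->
  mu K = (- \sum_(L : {group gT} | L \proper K) mu L)%R.
Proof.
move=> hK; rewrite /mu /mobius.
have -> : #|K| = (#|K|.-1).+1 by rewrite prednK // cardG_gt0.
rewrite /= eq_sym (negbTE hK) sub1G; congr (- _)%R.
apply: eq_big => [L|L /andP[_ hL]]; first by rewrite sub1G.
apply: mobius_rec_fuel => //; move/proper_card: hL.
by move=> h; rewrite -ltnS prednK // cardG_gt0.
Qed.

Lemma sum_mu K : K != 1%G -> (\sum_(L : {group gT} | L \subset K) mu L = 0)%R.
Proof.
move=> hK; rewrite (bigD1 K) //= mu_rec //.
rewrite (eq_bigl (fun L : {group gT} => L \proper K)) ?addNr //.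
by move=> L; rewrite properEneq andbC.
Qed.

Lemma sum_mu1 K : K != 1%G ->
  (\sum_(L : {group gT} | (L \subset K) && (L != 1%G)) mu L = -1)%R.
Proof.
move=> hK; have := sum_mu hK; rewrite (bigD1 1%G) ?sub1G //= mu1.
by move/eqP; rewrite addrC addr_eq0 => /eqP.
Qed.

Lemma conjG_inj x : injective (fun L : {group gT} => (L :^ x)%G).
Proof. by move=> L1 L2 /(congr1 val) /= /conjsg_inj /val_inj. Qed.

Lemma mobius_rec_conj n H K x :
  mobius_rec n (H :^ x)%G (K :^ x)%G = mobius_rec n H K.
Proof.
elim: n H K => [|n IH] H K //=.
have -> : ((H :^ x)%G == (K :^ x)%G) = (H == K).
  by apply/eqP/eqP => [/conjG_inj|->].
rewrite conjSg; case: eqP => // _; case: ifP => // _; congr (- _)%R.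
rewrite (reindex_inj (@conjG_inj x)) /=.
by apply: eq_big => [L|L _]; rewrite ?conjSg ?properJ.
Qed.

Lemma mu_conj K x : mu (K :^ x)%G = mu K.
Proof.
rewrite /mu /mobius cardJg.
have E : [1 gT]%G = (1 :^ x)%G by apply: val_inj; rewrite /= conjs1g.
by rewrite {1}E mobius_rec_conj.
Qed.

End Work.

Local Open Scope group_scope.

Section Work2.
Variable gT : finGroupType.
Implicit Types (G H K L a b : {group gT}).

Lemma orbit_sum G (P : pred {group gT}) (F : {group gT} -> rat) :
  (forall H x, x \in G -> P (H :^ x)%G = P H) ->
  (forall H x, P H -> x \in G -> F (H :^ x)%G = F H) ->
  (\sum_(H | P H) F H = \sum_(X in conj_classes G P)
      #|G : 'N_G(crep X)|%:R * F (crep X))%R.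
Proof.
move=> PJ FJ.
rewrite (eq_bigl (fun H => H \in P)) //.
rewrite (partition_big_imset (fun H => orbit 'JG G H)) /=.
apply: eq_bigr => _ /imsetP [H0 PH0 ->].
set Y := orbit 'JG G H0.
have Y0 : H0 \in Y by exact: orbit_refl.
have RY : crep Y \in Y.
  by rewrite /crep; case: pickP => [K //|/(_ H0)]; rewrite Y0.
have YP : forall H, H \in Y -> P H /\ F H = F (crep Y).
  move=> H /orbitP [g Gg <-]; move/orbitP: RY => [g' Gg' <-] /=.
  by rewrite PJ // FJ // FJ.
rewrite (eq_bigl (fun H => H \in Y)); last first.
  move=> H; rewrite /= -/Y; apply/andP/idP => [[_ /eqP <-]|HY].
    exact: orbit_refl.
  by split; [exact: (YP H HY).1 | apply/eqP/orbit_eqP].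
rewrite (eq_bigr (fun _ => F (crep Y))); last by move=> H /YP [].
have cY : #|Y| = #|G : 'N_G(crep Y)|.
  rewrite {1}(_ : Y = orbit 'JG G (crep Y)); last by apply/esym/orbit_eqP.
  by rewrite card_orbit astab1JG.
rewrite big_const -cY.
elim: #|Y| => [|n IH]; first by rewrite mul0r.
by rewrite iterS IH mulrSr mulrDl mul1r addrC.
Qed.


Lemma wcw_sum (obj : pred {group gT}) zeta w k :
  is_weighting obj zeta w -> is_coweighting obj zeta k ->
  (\sum_(a | obj a) k a = \sum_(b | obj b) w b)%R.
Proof.
move=> hw hk.
transitivity (\sum_(a | obj a) \sum_(b | obj b) k a * ((zeta a b)%:R * w b))%R.
  by apply: eq_bigr => a oa; rewrite -big_distrr /= hw ?mulr1.
rewrite exchange_big /=; apply: eq_bigr => b ob.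
transitivity ((\sum_(a | obj a) k a * (zeta a b)%:R) * w b)%R.
  by rewrite big_distrl /=; apply: eq_bigr => a _; rewrite mulrA.
by rewrite hk ?mul1r.
Qed.

Lemma euler_of (obj : pred {group gT}) zeta w c chi :
  is_weighting obj zeta w -> is_coweighting obj zeta c ->
  (\sum_(a | obj a) c a)%R = chi -> euler_char obj zeta chi.
Proof.
move=> hw hc hs; split; first (by exists w); first (by exists c).
  by move=> k hk; rewrite -hs (wcw_sum hk hc).
by move=> k hk; rewrite -hs (wcw_sum hw hk) (wcw_sum hw hc).
Qed.

End Work2.

Section Blocks.
Variable gT : finGroupType.

Lemma card_blocks (T : {set gT}) (blk : gT -> {set gT}) :
  (forall g, g \in T -> g \in blk g) ->
  (forall g h, g \in T -> h \in blk g -> h \in T /\ blk h = blk g) ->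
  (#|blk @: T|%:R = \sum_(g in T) 1 / #|blk g|%:R :> rat)%R.
Proof.
move=> h1 h2.
rewrite (partition_big_imset blk) /= -sum1_card natr_sum.
apply: eq_bigr => _ /imsetP [h0 Th0 ->].
rewrite (eq_bigl (fun g => g \in blk h0)); last first.
  move=> g; apply/andP/idP => [[Tg /eqP <-]|]; first exact: h1.
  by move=> /(h2 _ _ Th0) [Tg ->].
rewrite (eq_bigr (fun=> 1 / #|blk h0|%:R)%R); last first.
  by move=> g /(h2 _ _ Th0) [_ ->].
rewrite sumr_const div1r -(mulr_natr (#|blk h0|%:R^-1)) mulVf //.
by rewrite pnatr_eq0 -lt0n; apply/card_gt0P; exists h0; exact: h1.
Qed.

End Blocks.

Section Obj.
Variables (gT : finGroupType) (G : {group gT}) (p : nat).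
Implicit Types (H K L U a b : {group gT}).

Lemma group1J a x : ((a :^ x)%G == 1%G) = (a == 1%G).
Proof.
apply/eqP/eqP => [E|->]; last by apply: val_inj; rewrite /= conjs1g.
by apply: val_inj; apply: (@conjsg_inj _ x); rewrite conjs1g; move/(congr1 val): E.
Qed.

Lemma objJ a x : x \in G -> pobj p G (a :^ x)%G = pobj p G a.
Proof.
move=> Gx; rewrite /pobj /= group1J pgroupJ sub_conjg conjGid ?groupV //.
Qed.

Lemma obj_sub a b : pobj p G b -> a \subset b -> pobj p G a = (a != 1%G).
Proof.
case/and3P=> sbG pb _ sab; rewrite /pobj (subset_trans sab sbG) (pgroupS sab pb).
by [].
Qed.

Lemma transpE a b g : (g \in transp G a b) = (g \in G) && (a :^ g \subset b).
Proof. by rewrite inE. Qed.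

Lemma transp_self a : transp G a a = 'N_G(a).
Proof. by apply/setP => g; rewrite !inE. Qed.

Lemma sum_mu_obj b : pobj p G b ->
  (\sum_(a | pobj p G a && (a \subset b)) (mu a)%:~R = -1 :> rat)%R.
Proof.
move=> ob; have b1 : b != 1%G by case/and3P: ob.
rewrite (eq_bigl (fun a => (a \subset b) && (a != 1%G))); last first.
  by move=> a; case: (boolP (a \subset b)) => sab; rewrite ?andbF ?andbT // (obj_sub ob).
by rewrite -(big_morph _ (@intrD _) (@mulr0z _ 1)) sum_mu1.
Qed.


Lemma card_rcos a b U : U \subset G -> U \subset 'N(a) ->
  (#|[set U :* g | g in transp G a b]|%:R
     = #|transp G a b|%:R / #|U|%:R :> rat)%R.
Proof.
move=> sUG sUN.
rewrite (card_blocks (blk := fun g => U :* g)) => [||g h].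
- rewrite (eq_bigr (fun=> 1 / #|U|%:R)%R) ?sumr_const; last by move=> g _; rewrite card_rcoset.
  by rewrite -(mulr_natl (1 / #|U|%:R)) div1r.
- by move=> g _; rewrite rcoset_refl.
rewrite !transpE => /andP [Gg sab] /rcosetP [u Uu ->].
have Nu := subsetP sUN u Uu.
split; last by rewrite rcosetM (rcoset_id Uu).
have E : a :^ (u * g) = a :^ g by rewrite conjsgM (normP Nu).
apply/andP; split; [exact: groupM (subsetP sUG u Uu) Gg | by rewrite E].
Qed.

Lemma card_lcos a b : b \subset G ->
  (#|[set (g *: (b : {set gT}))%g | g in transp G a b]|%:R
     = #|transp G a b|%:R / #|b|%:R :> rat)%R.
Proof.
move=> sbG.
rewrite (card_blocks (blk := fun g => (g *: (b : {set gT}))%g)) => [||g h].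
- rewrite (eq_bigr (fun=> 1 / #|b|%:R)%R) ?sumr_const; last by move=> g _; rewrite card_lcoset.
  by rewrite -(mulr_natl (1 / #|b|%:R)) div1r.
- by move=> g _; rewrite lcoset_refl.
rewrite !transpE => /andP [Gg sab] /lcosetP [y yb ->].
split; last by rewrite lcosetM (lcoset_id yb).
have E : a :^ (g * y) \subset b by rewrite conjsgM -(conjGid yb) conjSg.
apply/andP; split; [exact: groupM Gg (subsetP sbG y yb) | exact: E].
Qed.

Lemma dcoset_card (C b : {group gT}) g :
  #|(C :* g) * b| = #|C * (b :^ g^-1)|.
Proof.
rewrite -[in RHS](card_rcoset _ g) conjsgE invgK !mulgA.
by rewrite -(mulgA _ [set g^-1] [set g]) mulg_set1 mulVg rcoset1.
Qed.

Lemma card_dcos a b (C : {group gT}) : C \subset G -> C \subset 'N(a) ->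
  b \subset G ->
  (#|[set ((C :* g) * b)%g | g in transp G a b]|%:R
     = \sum_(g in transp G a b) #|(C :&: b :^ g^-1)%g|%:R / (#|C|%:R * #|b|%:R) :> rat)%R.
Proof.
move=> sCG sCN sbG.
rewrite (card_blocks (blk := fun g => ((C :* g) * b)%g)) => [||g h].
- apply: eq_bigr => g _; rewrite dcoset_card.
  have := mul_cardG C (b :^ g^-1)%G; rewrite /= cardJg => E.
  rewrite -natrM E natrM invfM mulrCA mulfV ?mulr1 ?div1r //.
  by rewrite pnatr_eq0 -lt0n cardG_gt0.
- by move=> g _; apply/mulsgP; exists g 1; rewrite ?rcoset_refl ?group1 ?mulg1.
rewrite !transpE => /andP [Gg sab] /mulsgP [cg y /rcosetP [c Cc ->] yb ->].
have Nc := subsetP sCN c Cc.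
split; last by rewrite !rcosetM (rcoset_id Cc) -(mulgA _ [set y] b) (lcoset_id yb).
have E : a :^ (c * g * y) \subset b.
  by rewrite !conjsgM (normP Nc) -(conjGid yb) conjSg.
apply/andP; split => //.
by rewrite !groupM ?(subsetP sCG c Cc) ?(subsetP sbG y yb).
Qed.
End Obj.

Section Gen.
Variable gT : finGroupType.
Implicit Types (a b : {group gT}).

Lemma swap_dep (I J : finType) (P : pred I) (Q : pred J) (R : I -> J -> bool)
   (F : I -> J -> rat) :
  (\sum_(i | P i) \sum_(j | Q j && R i j) F i j =
   \sum_(j | Q j) \sum_(i | P i && R i j) F i j)%R.
Proof.
rewrite (exchange_big_dep Q) /=; last by move=> i j _ /andP [].
apply: eq_bigr => j Qj; apply: eq_bigl => i; by rewrite Qj.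
Qed.

Lemma upward_inv (obj : pred {group gT}) (c : {group gT} -> {group gT} -> rat)
    (f : {group gT} -> rat) :
  (forall a, obj a -> c a a != 0%R) ->
  exists k : {group gT} -> rat, forall a, obj a ->
    (\sum_(b | obj b && (a \subset b)) c a b * k b = f a)%R.
Proof.
move=> c0.
set M := #|gT|.+1.
suff main : forall m, (m <= M)%N -> exists k : {group gT} -> rat, forall a, obj a ->
    (M - m <= #|a|)%N ->
    (\sum_(b | obj b && (a \subset b)) c a b * k b = f a)%R.
  have [k hk] := main M (leqnn M).
  by exists k => a oa; apply: hk => //; rewrite subnn.
elim => [_|m IH hm].
  exists (fun=> 0%R) => a oa; rewrite subn0 => h.
  by move: (leq_trans h (max_card (mem a))); rewrite ltnn.
have [k hk] := IH (ltnW hm).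
set n' := (M - m.+1)%N.
have hn' : (M - m = n'.+1)%N by rewrite /n' subnSK.
exists (fun b => if #|b| == n' then
  ((f b - \sum_(b' | (obj b' && (b \subset b')) && (b' != b)) c b b' * k b') / c b b)%R
  else k b) => a oa ha.
have Hk : forall b, (a \subset b) -> b != a -> (#|b| != n').
  move=> b sab nba; rewrite neq_ltn; apply/orP; right.
  apply: leq_ltn_trans ha _; apply: proper_card; by rewrite properEneq eq_sym nba.
case: (eqVneq #|a| n') => [an|an].
  rewrite (bigD1 a) ?oa //= an eqxx mulrC -mulrA mulVf ?c0 // mulr1.
  rewrite [X in (_ + X)%R](eq_bigr (fun b => c a b * k b)%R); first exact: subrK.
  by move=> b /andP [/andP [_ sab] nba]; rewrite (negbTE (Hk b sab nba)).
have an2 : (M - m <= #|a|)%N by rewrite hn' ltn_neqAle eq_sym an ha.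
rewrite -(hk a oa an2); apply: eq_bigr => b /andP [_ sab].
case: (eqVneq b a) => [->|nba]; first by rewrite (negbTE an).
by rewrite (negbTE (Hk b sab nba)).
Qed.

End Gen.

Section Main.
Variables (gT : finGroupType) (G : {group gT}) (p : nat).
Implicit Types (a b : {group gT}).
Local Notation obj := (pobj p G).

Lemma card_sum1 (A : {set gT}) : (#|A|%:R = \sum_(g in A) 1 :> rat)%R.
Proof. by rewrite sumr_const. Qed.

Lemma sumT_swapR (a : {group gT}) (F : {group gT} -> gT -> rat) :
  (\sum_(b | obj b) \sum_(g in transp G a b) F b g =
   \sum_(g in G) \sum_(b | obj b && (a :^ g \subset b)) F b g)%R.
Proof.
rewrite -(swap_dep obj (fun g => g \in G) (fun b g => a :^ g \subset b)).
by apply: eq_bigr => b _; apply: eq_bigl => g; rewrite transpE.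
Qed.

Lemma sumT_swapL (b : {group gT}) (F : {group gT} -> gT -> rat) :
  (\sum_(a | obj a) \sum_(g in transp G a b) F a g =
   \sum_(g in G) \sum_(a | obj a && (a :^ g \subset b)) F a g)%R.
Proof.
rewrite -(swap_dep obj (fun g => g \in G) (fun a g => a :^ g \subset b)).
by apply: eq_bigr => a _; apply: eq_bigl => g; rewrite transpE.
Qed.

Lemma cowT (c f : {group gT} -> rat) b : obj b ->
  (forall b', obj b' -> \sum_(a | obj a && (a \subset b')) c a = f b')%R ->
  (forall b' x, obj b' -> x \in G -> f (b' :^ x)%G = f b') ->
  (\sum_(a | obj a) c a * #|transp G a b|%:R = #|G|%:R * f b)%R.
Proof.
move=> ob hc hf.
transitivity (\sum_(a | obj a) \sum_(g in transp G a b) c a)%R.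
  by apply: eq_bigr => a _; rewrite card_sum1 big_distrr /= ; apply: eq_bigr => g _; rewrite mulr1.
rewrite sumT_swapL (eq_bigr (fun=> f b)); first by rewrite sumr_const mulr_natl.
move=> g Gg; rewrite -(hf b g^-1) ?groupV // -hc ?objJ ?groupV //.
by apply: eq_bigl => a; rewrite sub_conjg.
Qed.

Lemma wT (k f : {group gT} -> rat) a : obj a ->
  (forall a', obj a' -> \sum_(b | obj b && (a' \subset b)) k b = f a')%R ->
  (forall a' x, obj a' -> x \in G -> f (a' :^ x)%G = f a') ->
  (\sum_(b | obj b) #|transp G a b|%:R * k b = #|G|%:R * f a)%R.
Proof.
move=> oa hk hf.
transitivity (\sum_(b | obj b) \sum_(g in transp G a b) k b)%R.
  by apply: eq_bigr => b _; rewrite card_sum1 big_distrl /= ; apply: eq_bigr => g _; rewrite mul1r.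
rewrite sumT_swapR (eq_bigr (fun=> f a)); first by rewrite sumr_const mulr_natl.
by move=> g Gg; rewrite -(hf a g) ?hk ?objJ.
Qed.

End Main.

Section Oup.
Variable gT : finGroupType.
Implicit Types (X : {group gT}).

Lemma Oup_group_set p (A : {set gT}) : group_set (Oup p A).
Proof. exact: group_set_bigcap. Qed.
Canonical Oup_group p A := group (Oup_group_set p A).

Lemma Oup_sub p X : Oup p X \subset X.
Proof.
apply: (bigcap_inf X); rewrite normal_refl trivg_quotient /=.
exact: pgroup1.
Qed.

Lemma OupJ p X x : Oup p (X :^ x) = Oup p X :^ x.
Proof.
rewrite /Oup -bigcapJ (reindex_inj (@conjG_inj _ x)) /=.
apply: eq_bigl => M; rewrite normalJ; apply: andb_id2l => nMX.
rewrite /pgroup !card_quotient ?normal_norm ?normalJ //.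
by rewrite indexJg.
Qed.

End Oup.

Section Main2.
Variables (gT : finGroupType) (G : {group gT}) (p : nat).
Implicit Types (a b : {group gT}).
Local Notation obj := (pobj p G).

Lemma centGJ a x : x \in G -> 'C_G(a :^ x) = 'C_G(a) :^ x.
Proof. by move=> Gx; rewrite conjIg -centJ (conjGid Gx). Qed.

Lemma G_neq0 : (#|G|%:R != 0 :> rat)%R.
Proof. by rewrite pnatr_eq0 -lt0n cardG_gt0. Qed.

Lemma euler_Tlike (u : {group gT} -> rat) (zeta : {group gT} -> {group gT} -> nat) :
  (forall a b, obj a -> obj b -> (zeta a b)%:R = #|transp G a b|%:R / u a :> rat)%R ->
  (forall a, obj a -> u a != 0%R) ->
  (forall a x, obj a -> x \in G -> u (a :^ x)%G = u a) ->
  euler_char obj zeta (\sum_(a | obj a) - (mu a)%:~R * u a / #|G|%:R)%R.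
Proof.
move=> hz hu0 huJ.
have H0 := @upward_inv gT obj (fun _ _ => 1%R) (fun a => (u a / #|G|%:R)%R).
have [k hk] : exists k : {group gT} -> rat, forall a, obj a ->
    (\sum_(b | obj b && (a \subset b)) 1 * k b = u a / #|G|%:R)%R.
  by apply: H0 => a _; exact: oner_neq0.
apply: (@euler_of _ _ _ k (fun a => - (mu a)%:~R * u a / #|G|%:R)%R).
- move=> a oa.
  rewrite (eq_bigr (fun b => (u a)^-1 * (#|transp G a b|%:R * k b))%R); last first.
    by move=> b ob; rewrite hz //; ring.
  rewrite -big_distrr /= (wT (f := fun a => u a / #|G|%:R)%R) //.
  + by field; rewrite G_neq0 hu0.
  + by move=> a' oa'; rewrite -(hk a' oa'); apply: eq_bigr => b _; rewrite mul1r.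
  + by move=> a' x oa' Gx; rewrite huJ.
- move=> b ob.
  rewrite (eq_bigr (fun a => - (mu a)%:~R / #|G|%:R * #|transp G a b|%:R)%R); last first.
    by move=> a oa; rewrite hz //; field; rewrite G_neq0 hu0.
  rewrite (cowT (f := fun=> (#|G|%:R)^-1)%R) ?mulfV ?G_neq0 //.
  move=> b' ob'; rewrite -big_distrl /= sumrN (sum_mu_obj ob') opprK mul1r //.
- by [].
Qed.


Lemma crep_P (P : pred {group gT}) X :
  (forall H x, x \in G -> P (H :^ x)%G = P H) ->
  X \in conj_classes G P -> P (crep X).
Proof.
move=> PJ /imsetP [H0 PH0 ->].
have Y0 : H0 \in orbit 'JG G H0 by exact: orbit_refl.
have : crep (orbit 'JG G H0) \in orbit 'JG G H0.
  by rewrite /crep; case: pickP => [K //|/(_ H0)]; rewrite Y0.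
by case/orbitP => g Gg <- /=; rewrite PJ.
Qed.

Lemma class_formula_mu (u : {group gT} -> rat) (zeta : {group gT} -> {group gT} -> nat) :
  (forall a, obj a -> (zeta a a)%:R = #|'N_G(a)|%:R / u a :> rat)%R ->
  (forall a, obj a -> u a != 0%R) ->
  (forall a x, obj a -> x \in G -> u (a :^ x)%G = u a) ->
  (\sum_(X in conj_classes G obj)
     - (mu (crep X))%:~R / (zeta (crep X) (crep X))%:R =
   \sum_(a | obj a) - (mu a)%:~R * u a / #|G|%:R :> rat)%R.
Proof.
move=> hz hu0 huJ.
rewrite (orbit_sum (G := G) (P := obj) (F := fun a => - (mu a)%:~R * u a / #|G|%:R)%R).
- apply: eq_bigr => X hX.
  have oX : obj (crep X) by apply: crep_P hX => H x Gx; exact: objJ.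
  rewrite hz // -(Lagrange (subsetIl G 'N(crep X))) natrM.
  have h1 : (#|'N_G(crep X)|%:R != 0 :> rat)%R by rewrite pnatr_eq0 -lt0n cardG_gt0.
  have h2 : (#|G : 'N_G(crep X)|%:R != 0 :> rat)%R by rewrite pnatr_eq0 -lt0n indexg_gt0.
  by field; rewrite h1 h2 hu0.
- by move=> H x Gx; rewrite objJ.
- by move=> H x oH Gx; rewrite mu_conj huJ.
Qed.
End Main2.

Section Cats.
Variables (gT : finGroupType) (G : {group gT}) (p : nat).
Implicit Types (a b : {group gT}).
Local Notation obj := (pobj p G).

Definition chiT := (\sum_(X in conj_classes G obj)
                 - (mu (crep X))%:~R / (zetaT G (crep X) (crep X))%:R)%R : rat.
Definition chiL := (\sum_(X in conj_classes G obj)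
                 - (mu (crep X))%:~R / (zetaL p G (crep X) (crep X))%:R)%R : rat.
Definition chiF := (\sum_(X in conj_classes G obj)
                 - (mu (crep X))%:~R / (zetaF G (crep X) (crep X))%:R)%R : rat.

Lemma chiT_E : chiT = (\sum_(a | obj a) - (mu a)%:~R * 1 / #|G|%:R)%R.
Proof.
rewrite /chiT; apply: (@class_formula_mu gT G p (fun=> 1%R)) => //.
- by move=> a oa; rewrite /zetaT transp_self divr1.
Qed.

Lemma eulerT : euler_char obj (@zetaT gT G) chiT.
Proof.
rewrite chiT_E; apply: (@euler_Tlike gT G p (fun=> 1%R)) => //.
- by move=> a b _ _; rewrite divr1.
Qed.

Lemma CsubN a : 'C_G(a) \subset 'N(a).
Proof. by apply: subIset; rewrite cent_sub orbT. Qed.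

Lemma card_CJ a x : x \in G -> #|'C_G(a :^ x)| = #|'C_G(a)|.
Proof. by move=> Gx; rewrite centGJ // cardJg. Qed.

Lemma chiF_E : chiF = (\sum_(a | obj a) - (mu a)%:~R * #|'C_G(a)|%:R / #|G|%:R)%R.
Proof.
rewrite /chiF; apply: (@class_formula_mu gT G p (fun a => #|'C_G(a)|%:R%R)).
- by move=> a oa; rewrite /zetaF (@card_rcos gT G a a 'C_G(a)%G) ?subsetIl ?CsubN ?transp_self.
- by move=> a _; rewrite pnatr_eq0 -lt0n cardG_gt0.
- by move=> a x _ Gx; rewrite card_CJ.
Qed.

Lemma eulerF : euler_char obj (@zetaF gT G) chiF.
Proof.
rewrite chiF_E; apply: (@euler_Tlike gT G p (fun a => #|'C_G(a)|%:R%R)).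
- by move=> a b _ _; rewrite /zetaF (@card_rcos gT G a b 'C_G(a)%G) ?subsetIl ?CsubN.
- by move=> a _; rewrite pnatr_eq0 -lt0n cardG_gt0.
- by move=> a x _ Gx; rewrite card_CJ.
Qed.

Lemma OupC_G a : Oup p 'C_G(a) \subset G.
Proof. exact: subset_trans (Oup_sub _ _) (subsetIl _ _). Qed.

Lemma OupC_N a : Oup p 'C_G(a) \subset 'N(a).
Proof. exact: subset_trans (Oup_sub _ _) (CsubN a). Qed.

Lemma card_OupJ a x : x \in G -> #|Oup p 'C_G(a :^ x)| = #|Oup p 'C_G(a)|.
Proof. by move=> Gx; rewrite centGJ // (OupJ p 'C_G(a)%G) cardJg. Qed.

Lemma chiL_E : chiL = (\sum_(a | obj a) - (mu a)%:~R * #|Oup p 'C_G(a)|%:R / #|G|%:R)%R.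
Proof.
rewrite /chiL; apply: (@class_formula_mu gT G p (fun a => #|Oup p 'C_G(a)|%:R%R)).
- move=> a oa; rewrite /zetaL (@card_rcos gT G a _ (Oup_group p 'C_G(a))) ?transp_self //.
  + exact: OupC_G.
  + exact: OupC_N.
- by move=> a _; rewrite pnatr_eq0 -lt0n (cardG_gt0 (Oup_group p 'C_G(a))).
- by move=> a x _ Gx; rewrite card_OupJ.
Qed.

Lemma eulerL : euler_char obj (@zetaL gT p G) chiL.
Proof.
rewrite chiL_E; apply: (@euler_Tlike gT G p (fun a => #|Oup p 'C_G(a)|%:R%R)).
- move=> a b _ _; rewrite /zetaL (@card_rcos gT G a _ (Oup_group p 'C_G(a))) //.
  + exact: OupC_G.
  + exact: OupC_N.
- by move=> a _; rewrite pnatr_eq0 -lt0n (cardG_gt0 (Oup_group p 'C_G(a))).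
- by move=> a x _ Gx; rewrite card_OupJ.
Qed.

End Cats.

Section Cats2.
Variables (gT : finGroupType) (G : {group gT}) (p : nat).
Implicit Types (a b : {group gT}).
Local Notation obj := (pobj p G).

Lemma sum_boolL (P : pred {group gT}) (Q : {group gT} -> bool) (F : {group gT} -> rat) :
  (\sum_(b | P b) (nat_of_bool (Q b))%:R * F b = \sum_(b | P b && Q b) F b)%R.
Proof.
rewrite big_mkcondr /=; apply: eq_bigr => b _; case: (Q b) => /=.
  by rewrite mul1r. by rewrite mul0r.
Qed.

Lemma sum_boolR (P : pred {group gT}) (Q : {group gT} -> bool) (F : {group gT} -> rat) :
  (\sum_(b | P b) F b * (nat_of_bool (Q b))%:R = \sum_(b | P b && Q b) F b)%R.
Proof.
rewrite big_mkcondr /=; apply: eq_bigr => b _; case: (Q b) => /=.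
  by rewrite mulr1. by rewrite mulr0.
Qed.

Lemma eulerS : euler_char obj (@zetaS gT) (#|G|%:R * chiT G p)%R.
Proof.
have [|k hk] := @upward_inv gT obj (fun _ _ => 1%R) (fun=> 1%R).
  by move=> a _; exact: oner_neq0.
apply: (@euler_of _ _ _ k (fun a => - (mu a)%:~R)%R).
- move=> a oa; rewrite /zetaS sum_boolL -(hk a oa).
  by apply: eq_bigr => b _; rewrite mul1r.
- move=> b ob; rewrite /zetaS sum_boolR sumrN (sum_mu_obj ob) opprK.
  by [].
- rewrite chiT_E big_distrr /=; apply: eq_bigr => a _.
  by field; rewrite G_neq0.
Qed.


Lemma objC1 b x : obj b -> x \in b -> obj ('C_b[x])%G.
Proof.
move=> ob xb; have [sbG pb b1] := and3P ob.
rewrite /pobj /= (subset_trans (subsetIl _ _) sbG) (pgroupS (subsetIl _ _) pb) /=.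
apply: contra b1 => /eqP /(congr1 val) /= E.
have xC : x \in 'C_b[x] by rewrite inE xb cent1id.
have x1 : x = 1 by move: xC; rewrite E => /set1P.
apply/eqP; apply: val_inj; move: E; rewrite /= x1 cent11T setIT.
by [].
Qed.

Lemma key_ft b : obj b ->
  (\sum_(a | obj a && (a \subset b)) - (mu a)%:~R * #|'C_G(a) :&: b|%:R = #|b|%:R :> rat)%R.
Proof.
move=> ob; have sbG : b \subset G by case/and3P: ob.
transitivity (\sum_(a | obj a && (a \subset b))
   \sum_(x | (x \in b) && (a \subset 'C[x])) (- (mu a)%:~R) :> rat)%R.
  apply: eq_bigr => a /andP [oa sab].
  rewrite card_sum1 big_distrr /=; apply: eq_big => [x|x _]; last by rewrite mulr1.
  rewrite !inE sub_cent1 andbC; case xb: (x \in b) => //=.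
  by rewrite (subsetP sbG x xb).
rewrite swap_dep card_sum1; apply: eq_bigr => x xb.
rewrite (eq_bigl (fun a => obj a && (a \subset 'C_b[x]))); last first.
  by move=> a; rewrite subsetI andbA.
by rewrite sumrN (sum_mu_obj (objC1 ob xb)) opprK.
Qed.

Lemma cardCJ2 a b g : g \in G ->
  #|'C_G(a) :&: b :^ g^-1| = #|'C_G(a :^ g) :&: b|.
Proof. by move=> Gg; rewrite -(cardJg _ g) conjIg conjsgKV -centGJ. Qed.

Lemma zetaFtE a b : obj a -> obj b ->
  ((zetaFt G a b)%:R = \sum_(g in transp G a b)
     #|('C_G(a) :&: b :^ g^-1)%g|%:R / (#|'C_G(a)|%:R * #|b|%:R) :> rat)%R.
Proof.
move=> oa ob; rewrite /zetaFt card_dcos //; first exact: subsetIl.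
  exact: CsubN.
by case/and3P: ob.
Qed.

Lemma eulerFt : euler_char obj (@zetaFt gT G) (chiF G p).
Proof.
have [|j hj] := @upward_inv gT obj (fun a b => #|'C_G(a) :&: b|%:R)%R
   (fun a => #|'C_G(a)|%:R / #|G|%:R)%R.
  by move=> a _; rewrite pnatr_eq0 -lt0n (cardG_gt0 ('C_G(a) :&: a)%G).
apply: (@euler_of _ _ _ (fun b => j b * #|b|%:R)%R
   (fun a => - (mu a)%:~R * #|'C_G(a)|%:R / #|G|%:R)%R); last by rewrite chiF_E.
- move=> a oa.
  transitivity (\sum_(b | obj b) \sum_(g in transp G a b)
     (#|'C_G(a)|%:R)^-1 * (#|'C_G(a :^ g) :&: b|%:R * j b) :> rat)%R.
    apply: eq_bigr => b ob; rewrite zetaFtE // big_distrl /=.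
    apply: eq_bigr => g; rewrite transpE => /andP [Gg _].
    rewrite cardCJ2 //; field.
    by rewrite !pnatr_eq0 -!lt0n !cardG_gt0.
  rewrite sumT_swapR.
  transitivity (\sum_(g in G) (#|G|%:R)^-1 :> rat)%R.
    apply: eq_bigr => g Gg; rewrite -big_distrr /= hj ?objJ //.
    rewrite card_CJ //; field.
    by rewrite G_neq0 pnatr_eq0 -lt0n cardG_gt0.
  by rewrite sumr_const -(mulr_natr ((#|G|%:R)^-1)) mulVf ?G_neq0.
- move=> b ob.
  transitivity (\sum_(a | obj a) \sum_(g in transp G a b)
     (#|G|%:R * #|b|%:R)^-1 * (- (mu a)%:~R * #|'C_G(a) :&: b :^ g^-1|%:R) :> rat)%R.
    apply: eq_bigr => a oa; rewrite zetaFtE // big_distrr /=.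
    apply: eq_bigr => g _; field.
    by rewrite G_neq0 !pnatr_eq0 -!lt0n !cardG_gt0.
  rewrite sumT_swapL.
  transitivity (\sum_(g in G) (#|G|%:R)^-1 :> rat)%R.
    apply: eq_bigr => g Gg; rewrite -big_distrr /=.
    have ob' : obj (b :^ g^-1)%G by rewrite objJ ?groupV.
    rewrite (eq_bigl (fun a => obj a && (a \subset (b :^ g^-1)%G))); last first.
      by move=> a; rewrite sub_conjg.
    rewrite (key_ft ob') /= cardJg; field.
    by rewrite G_neq0 pnatr_eq0 -lt0n cardG_gt0.
  by rewrite sumr_const -(mulr_natr ((#|G|%:R)^-1)) mulVf ?G_neq0.
Qed.
End Cats2.

Section CatO.
Variables (gT : finGroupType) (G : {group gT}) (p : nat).
Hypothesis hp : prime p.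
Implicit Types (a b : {group gT}).
Local Notation obj := (pobj p G).

Definition egen a : rat := (#|[set x : gT | <[x]> == gval a]|%:R)%R.

Lemma grp_eq (a b : {group gT}) : (a == b) = (gval a == gval b).
Proof. by apply/eqP/eqP => [->//|E]; exact: val_inj. Qed.

Lemma sum_e b : obj b ->
  (\sum_(a | obj a && (a \subset b)) egen a = #|b|%:R - 1)%R.
Proof.
move=> ob.
transitivity (\sum_(a | obj a && (a \subset b)) \sum_(x | true && (<[x]> == gval a)) 1 : rat)%R.
  apply: eq_bigr => a _; rewrite /egen card_sum1.
  by apply: eq_bigl => x; rewrite inE.
rewrite swap_dep.
transitivity (\sum_(x | true) (if (x \in b) && (x != 1%g) then 1 else 0) : rat)%R.
  apply: eq_bigr => x _.
  case H: ((x \in b) && (x != 1%g)).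
    rewrite (eq_bigl (pred1 (<[x]>%G))); first by rewrite big_pred1_eq.
    move=> a /=; rewrite eq_sym grp_eq /=.
    case E: (gval a == <[x]>); rewrite ?andbF //= andbT.
    have -> : a = <[x]>%G by apply: val_inj; apply/eqP.
    case/andP: H => xb x1.
    by rewrite cycle_subG xb (obj_sub ob) ?cycle_subG // grp_eq /= cycle_eq1 x1.
  rewrite big_pred0 // => a.
  case E: (<[x]> == gval a); rewrite ?andbF //= andbT.
  have -> : a = <[x]>%G by apply: val_inj; apply/esym/eqP.
  apply/negbTE; apply: contraFN H => /andP [oa].
  move: oa; rewrite cycle_subG => oa xb.
  by move: (oa); rewrite (obj_sub ob) ?cycle_subG // grp_eq /= cycle_eq1 xb.
rewrite -big_mkcond /=.
have := card_sum1 b; rewrite (bigD1 1) ?group1 //= => ->.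
rewrite addrC addrK; apply: eq_bigl => x; by rewrite andbC.
Qed.


Lemma p_neq0 : (p%:R != 0 :> rat)%R.
Proof. by rewrite pnatr_eq0 -lt0n prime_gt0. Qed.

Lemma e_val a : obj a ->
  egen a = (if cyclic a then (p.-1)%:R / p%:R * #|a|%:R else 0)%R.
Proof.
move=> oa; have [saG pa a1] := and3P oa.
case: (boolP (cyclic a)) => [/cyclicP [x ax] | ncyc]; last first.
  rewrite /egen (_ : [set y | <[y]> == gval a] = set0) ?cards0 //.
  apply/setP => y; rewrite !inE; apply/negbTE; apply: contra ncyc => /eqP <-.
  exact: cycle_cyclic.
rewrite /egen (_ : [set y | <[y]> == gval a] = [set y | generator <[x]> y]); last first.
  by apply/setP => y; rewrite !inE /generator ax eq_sym.
rewrite -totient_gen.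
have [n hn] := p_natP pa.
have n0 : (0 < n)%N.
  case: n hn => // hn; move: a1; rewrite grp_eq /= trivg_card1 hn expn0 eqxx.
  by [].
have cx : #[x] = #|a| by rewrite ax.
rewrite cx hn totient_pfactor // -(prednK n0) expnS /= natrM natrM.
by field; rewrite p_neq0.
Qed.


Lemma zetaOE a b : obj b ->
  ((zetaO G a b)%:R = #|transp G a b|%:R / #|b|%:R :> rat)%R.
Proof. by move=> ob; rewrite /zetaO card_lcos //; case/and3P: ob. Qed.

Lemma cyc_sum :
  (\sum_(a | obj a) egen a / #|G|%:R =
   (p.-1)%:R / p%:R * \sum_(X in conj_classes G (fun H => obj H && cyclic H))
      1 / (zetaO G (crep X) (crep X))%:R :> rat)%R.
Proof.
have PJ : forall (H : {group gT}) x, x \in G ->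
    (fun H => obj H && cyclic H) (H :^ x)%G = (fun H => obj H && cyclic H) H.
  by move=> H x Gx /=; rewrite objJ // cyclicJ.
transitivity (\sum_(a | obj a && cyclic a) (p.-1)%:R / p%:R * #|a|%:R / #|G|%:R : rat)%R.
  rewrite [RHS]big_mkcondr /=; apply: eq_bigr => a oa; rewrite e_val //.
  by case: (cyclic a); rewrite ?mul0r.
rewrite (orbit_sum (G := G) (P := fun H => obj H && cyclic H)
   (F := fun a => (p.-1)%:R / p%:R * #|a|%:R / #|G|%:R)%R) //.
- rewrite big_distrr /=; apply: eq_bigr => X hX.
  have /andP [oX _] := crep_P PJ hX.
  rewrite zetaOE // transp_self -(Lagrange (subsetIl G 'N(crep X))) natrM.
  have h1 : (#|'N_G(crep X)|%:R != 0 :> rat)%R by rewrite pnatr_eq0 -lt0n cardG_gt0.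
  have h2 : (#|G : 'N_G(crep X)|%:R != 0 :> rat)%R by rewrite pnatr_eq0 -lt0n indexg_gt0.
  have h3 : (#|crep X|%:R != 0 :> rat)%R by rewrite pnatr_eq0 -lt0n cardG_gt0.
  by field; rewrite h1 h2 h3 p_neq0.
- by move=> H x _ _; rewrite cardJg.
Qed.

Lemma eulerO : euler_char obj (@zetaO gT G)
   (chiT G p + (p.-1)%:R / p%:R *
      \sum_(X in conj_classes G (fun H => obj H && cyclic H))
         1 / (zetaO G (crep X) (crep X))%:R)%R.
Proof.
have [|w hw] := @upward_inv gT obj (fun _ _ => 1%R) (fun=> (#|G|%:R)^-1)%R.
  by move=> a _; exact: oner_neq0.
apply: (@euler_of _ _ _ (fun b => #|b|%:R * w b)%R
   (fun a => (egen a - (mu a)%:~R) / #|G|%:R)%R).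
- move=> a oa.
  transitivity (\sum_(b | obj b) #|transp G a b|%:R * w b : rat)%R.
    apply: eq_bigr => b ob; rewrite zetaOE //; field.
    by rewrite pnatr_eq0 -lt0n cardG_gt0.
  rewrite (wT (f := fun=> (#|G|%:R)^-1)%R) ?mulfV ?G_neq0 //.
  by move=> a' oa'; rewrite -(hw a' oa'); apply: eq_bigr => b _; rewrite mul1r.
- move=> b ob.
  transitivity ((#|b|%:R)^-1 * \sum_(a | obj a)
      (egen a - (mu a)%:~R) / #|G|%:R * #|transp G a b|%:R : rat)%R.
    rewrite big_distrr /=; apply: eq_bigr => a oa; rewrite zetaOE //; field.
    by rewrite G_neq0 pnatr_eq0 -lt0n cardG_gt0.
  rewrite (cowT (f := fun b => #|b|%:R / #|G|%:R)%R) //.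
  + by field; rewrite G_neq0 pnatr_eq0 -lt0n cardG_gt0.
  + move=> b' ob'; rewrite -big_distrl /= sumrB sum_e // (sum_mu_obj ob').
    by rewrite subrK.
  + by move=> b' x _ _; rewrite cardJg.
- rewrite -cyc_sum chiT_E -big_split /=; apply: eq_bigr => a _.
  by field; rewrite G_neq0.
Qed.

End CatO.



Local Close Scope group_scope.

Theorem theorem1p1 (gT : finGroupType) (G : {group gT}) (p : nat) (hp : prime p) :
  let obj := pobj p G in
  let chiT := (\sum_(X in conj_classes G obj)
                 - (mu (crep X))%:~R / (zetaT G (crep X) (crep X))%:R)%R : rat in
  let chiL := (\sum_(X in conj_classes G obj)
                 - (mu (crep X))%:~R / (zetaL p G (crep X) (crep X))%:R)%R : rat in
  let chiF := (\sum_(X in conj_classes G obj)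
                 - (mu (crep X))%:~R / (zetaF G (crep X) (crep X))%:R)%R : rat in
  [/\ euler_char obj (@zetaT gT G) chiT,
      euler_char obj (@zetaL gT p G) chiL,
      euler_char obj (@zetaF gT G) chiF &
    [/\
      euler_char obj (@zetaS gT) (#|G|%:R * chiT)%R,
      euler_char obj (@zetaFt gT G) chiF
    & euler_char obj (@zetaO gT G)
        (chiT + (p.-1)%:R / p%:R *
           \sum_(X in conj_classes G (fun H => obj H && cyclic H))
              1 / (zetaO G (crep X) (crep X))%:R)%R]].
Proof.
move=> obj chiT0 chiL0 chiF0.
split; [exact: eulerT | exact: eulerL | exact: eulerF |].
split; [exact: eulerS | exact: eulerFt | exact: eulerO].
Qed.
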